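(* (a) If $\mathcal{T}_1=(V,\mathsf{p}_1)$ and $\mathcal{T}_2=(V,\mathsf{p}_2)$ are directed forests, then $\mathcal{T}_1$ is thinner than $\mathcal{T}_2$ if and only if $\mathrm{Chi}_{\mathcal{T}_1}(v)\subseteq\mathrm{Chi}_{\mathcal{T}_2}(v)$ for every $v\in V$. (b) Thickness (''thinner than'') is a partial order on the set of all directed forests with a fixed set of vertices $V$. (c) The degenerate forest $(V,\mathrm{id}_V)$ is the smallest element with respect to this partial order among directed forests with vertex set $V$. (d) The maximal elements with respect to this partial order are precisely the directed trees and the rootless directed forests.
   Context: A directed forest is a pair $\mathcal{T}=(V,\mathsf{p})$ where $V$ is a nonempty set and $\mathsf{p}\colon V\to V$ satisfies: if $n\in\mathbb{N}$, $v\in V$ and $\mathsf{p}^n(v)=v$, then $\mathsf{p}(v)=v$. Roots: $\mathrm{root}(\mathcal{T})=\{v:\mathsf{p}(v)=v\}$; $\mathcal{T}$ is rootless if it has no roots. Children: $\mathrm{Chi}_{\mathcal{T}}(v)=\{u\in V:\mathsf{p}(u)=v\neq u\}$. The trees of $\mathcal{T}$ are the connected components of the graph with vertex set $V$ and edges $\{\mathsf{p}(u),u\}$ for $u\notin\mathrm{root}(\mathcal{T})$ (equivalently, classes of the relation $u\sim w$ iff $\mathsf{p}^m(u)=\mathsf{p}^n(w)$ for some $m,n\geq0$). A directed tree is a directed forest having exactly one tree. For directed forests $\mathcal{T}_1=(V,\mathsf{p}_1)$, $\mathcal{T}_2=(V,\mathsf{p}_2)$ on the same vertex set, $\mathcal{T}_1$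 is thinner than $\mathcal{T}_2$ ($\mathcal{T}_2$ thicker than $\mathcal{T}_1$) if $\mathsf{p}_1(v)\in\{v,\mathsf{p}_2(v)\}$ for all $v\in V$. *)

(* Defs.v *)
From Stdlib Require Import Arith.

Definition piter {V : Type} (n : nat) (p : V -> V) (v : V) : V := Nat.iter n p v.

(* Directed forest: every periodic point of p (period n >= 1) is a fixed point.
   (n ranges over positive naturals; n = 0 would force p = id.) *)
Definition directed_forest {V : Type} (p : V -> V) : Prop :=
  forall (n : nat) (v : V), piter (S n) p v = v -> p v = v.

Definition is_root {V : Type} (p : V -> V) (v : V) : Prop := p v = v.

Definition rootless {V : Type} (p : V -> V) : Prop := forall v : V, ~ is_root p v.

Definition Chi {V : Type} (p : V -> V) (v u : V) : Prop := p u = v /\ v <> u.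

Definition same_tree {V : Type} (p : V -> V) (u w : V) : Prop :=
  exists m n : nat, piter m p u = piter n p w.

(* A directed tree: a directed forest with exactly one tree
   (V is assumed nonempty, so: all vertices lie in the same tree). *)
Definition directed_tree {V : Type} (p : V -> V) : Prop :=
  directed_forest p /\ forall u w : V, same_tree p u w.

Definition thinner {V : Type} (p1 p2 : V -> V) : Prop :=
  forall v : V, p1 v = v \/ p1 v = p2 v.

(* Main.v *)
Require Import Defs.
From Stdlib Require Import Arith Lia Classical FunctionalExtensionality ClassicalEpsilon.

Lemma piter_S_r {V} (p : V -> V) n w : piter (S n) p w = piter n p (p w).
Proof. unfold piter. induction n; simpl in *; auto. rewrite <- IHn. reflexivity. Qed.

Lemma piter_add {V} (p : V -> V) a b u : piter (a + b) p u = piter a p (piter b p u).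
Proof. unfold piter. induction a; simpl; auto. rewrite IHa. reflexivity. Qed.

Lemma piter_root {V} (p : V -> V) u m : p u = u -> piter m p u = u.
Proof. intro H. unfold piter. induction m; simpl; auto. rewrite IHm. exact H. Qed.

Lemma st_sym {V} (p : V -> V) u w : same_tree p u w -> same_tree p w u.
Proof. intros [m [n H]]. exists n, m. auto. Qed.

Lemma st_trans {V} (p : V -> V) u v w :
  same_tree p u v -> same_tree p v w -> same_tree p u w.
Proof.
  intros [a [b H1]] [c [d H2]]. exists (c + a), (b + d).
  rewrite !piter_add, H1, <- !piter_add, Nat.add_comm, piter_add, H2, <- piter_add.
  reflexivity.
Qed.

Lemma st_iter {V} (p : V -> V) y k : same_tree p (piter k p y) y.
Proof. exists 0, k. reflexivity. Qed.

Lemma st_p {V} (p : V -> V) y : same_tree p (p y) y.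
Proof. exact (st_iter p y 1). Qed.

Theorem theorem3p5 (V : Type) (HV : inhabited V) :
  (* (a) *)
  (forall p1 p2 : V -> V, directed_forest p1 -> directed_forest p2 ->
     (thinner p1 p2 <-> forall v u : V, Chi p1 v u -> Chi p2 v u))
  /\
  (* (b) partial order on directed forests with vertex set V *)
  ((forall p : V -> V, directed_forest p -> thinner p p)
   /\ (forall p q : V -> V, directed_forest p -> directed_forest q ->
         thinner p q -> thinner q p -> p = q)
   /\ (forall p q r : V -> V, directed_forest p -> directed_forest q ->
         directed_forest r -> thinner p q -> thinner q r -> thinner p r))
  /\
  (* (c) the degenerate forest is the least element *)
  (directed_forest (fun v : V => v)
   /\ forall p : V -> V, directed_forest p -> thinner (fun v : V => v) p)
  /\
  (* (d) maximal elements = directed trees and rootless directed forests *)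
  (forall p : V -> V, directed_forest p ->
     ((forall q : V -> V, directed_forest q -> thinner p q -> q = p)
      <-> (directed_tree p \/ rootless p))).
Proof.
  split; [|split; [|split]].
  - intros p1 p2 _ _; split.
    + intros T v u [H1 H2]. destruct (T u) as [E|E].
      * exfalso. apply H2. congruence.
      * split; congruence.
    + intros H v. destruct (classic (p1 v = v)) as [E|E]; [left; exact E|right].
      destruct (H (p1 v) v) as [H1 _]. * split; auto. * auto.
  - split; [|split].
    + intros p _ v. right. reflexivity.
    + intros p q _ _ T1 T2. apply functional_extensionality. intro v.
      destruct (T1 v), (T2 v); congruence.
    + intros p q r _ _ _ T1 T2 v. destruct (T1 v), (T2 v); [left|left|left|right]; congruence.
  - split.
    + intros n v _. reflexivity.
    + intros p _ v. left. reflexivity.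
  - intros p Fp. split.
    + intro Hmax. destruct (classic (rootless p)) as [R|R]; [right; exact R|left].
      split; [exact Fp|].
      apply NNPP. intro NT.
      assert (Hr : exists r, p r = r).
      { apply NNPP. intro N. apply R. intros v Hv. apply N. exists v. exact Hv. }
      destruct Hr as [r Hr].
      assert (Hx : exists x, ~ same_tree p x r).
      { apply NNPP. intro N. apply NT. intros u w.
        assert (Hu : same_tree p u r) by (apply NNPP; intro; apply N; eauto).
        assert (Hw : same_tree p w r) by (apply NNPP; intro; apply N; eauto).
        eapply st_trans; [exact Hu| apply st_sym; exact Hw]. }
      destruct Hx as [x Hx].
      set (q := fun v => if excluded_middle_informative (v = r) then x else p v).
      assert (qr : q r = x).
      { unfold q. destruct (excluded_middle_informative (r = r)); congruence. }
      assert (qv : forall v, v <> r -> q v = p v).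
      { intros v Hv. unfold q. destruct (excluded_middle_informative (v = r)); congruence. }
      assert (xr : forall y, same_tree p y x -> y <> r).
      { intros y Hy E. subst y. apply Hx. apply st_sym. exact Hy. }
      assert (L' : forall k y, same_tree p y x -> piter k q y = piter k p y).
      { induction k; intros y Hy; [reflexivity|].
        change (q (piter k q y) = p (piter k p y)). rewrite IHk by exact Hy.
        apply qv, xr. eapply st_trans; [apply st_iter|exact Hy]. }
      assert (L : forall k y, same_tree p y x -> same_tree p (piter k q y) x).
      { intros k y Hy. rewrite L' by exact Hy. eapply st_trans; [apply st_iter|exact Hy]. }
      assert (M : forall k v, piter k q v = piter k p v \/ same_tree p (piter k q v) x).
      { induction k; intro v; [left; reflexivity|].
        change (q (piter k q v) = p (piter k p v) \/ same_tree p (q (piter k q v)) x).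
        destruct (IHk v) as [E|S].
        - destruct (classic (piter k q v = r)) as [Er|Er].
          + right. rewrite Er, qr. exists 0, 0. reflexivity.
          + left. rewrite qv by exact Er. congruence.
        - right. rewrite qv by (apply xr; exact S).
          eapply st_trans; [apply st_p|exact S]. }
      assert (Fq : directed_forest q).
      { intros n v Hc. destruct (classic (v = r)) as [Er|Er].
        - exfalso. subst v. rewrite piter_S_r, qr in Hc.
          apply Hx. apply st_sym. rewrite <- Hc. apply L. exists 0, 0. reflexivity.
        - rewrite qv by exact Er. apply (Fp n).
          destruct (M (S n) v) as [E|St].
          + congruence.
          + rewrite Hc in St. rewrite <- (L' (S n) v St). exact Hc. }
      assert (Tq : thinner p q).
      { intro v. destruct (classic (v = r)) as [Er|Er].
        - left. rewrite Er. exact Hr.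
        - right. symmetry. apply qv. exact Er. }
      pose proof (Hmax q Fq Tq) as Eq.
      assert (q r = p r) by (rewrite Eq; reflexivity).
      rewrite qr, Hr in H. apply Hx. rewrite H. exists 0, 0. reflexivity.
    + intros Hd q Fq T. apply functional_extensionality. intro v.
      destruct (T v) as [E|E]; [|symmetry; exact E].
      destruct Hd as [[_ Ht]|R]; [|exfalso; exact (R v E)].
      rewrite E.
      assert (Runiq : forall u, p u = u -> u = v).
      { intros u Hu. destruct (Ht u v) as [m [n H]].
        rewrite !piter_root in H by assumption. exact H. }
      apply NNPP. intro Nq. set (w := q v) in *.
      destruct (Ht w v) as [m [n H]]. rewrite (piter_root p v n E) in H.
      assert (K : forall m w, piter m p w = v -> exists k, piter k q w = v).
      { induction m0 as [|m0 IH]; intros w0 H0.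
        - exists 0. exact H0.
        - destruct (classic (w0 = v)) as [Ew|Ew]; [exists 0; exact Ew|].
          assert (Np : p w0 <> w0) by (intro X; apply Ew, Runiq, X).
          destruct (T w0) as [X|X]; [contradiction|].
          rewrite piter_S_r in H0. destruct (IH _ H0) as [k Hk].
          exists (S k). rewrite piter_S_r, <- X. exact Hk. }
      destruct (K m w H) as [k Hk].
      apply Nq. apply (Fq k v). rewrite piter_S_r. exact Hk.
Qed.
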